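(* Consider the covariate-adaptive randomization design described in the context with $I=2$ covariates, each having 2 levels (so $2\times 2=4$ strata). Let the weights $w_{o}, w_{m,1}, w_{m,2}, w_{s}$ be nonnegative with $w_{o}+w_{m,1}+w_{m,2}+w_{s}=1$. Suppose the following two conditions hold: (A) $w_{s}>0$; (B) define $u_{1}=w_{o}+w_{m,1}+w_{m,2}+w_{s}=1$, $u_{2}=w_{o}+w_{m,1}$, $u_{3}=w_{o}+w_{m,2}$, $u_{4}=w_{o}$; the solution $\mathbf{x}=(x_{1},x_{2},x_{3})$ of the linear system \[ \begin{pmatrix} u_{1} & u_{2} & u_{3}\\ u_{2} & u_{1} & u_{4}\\ u_{3} & u_{4} & u_{1}\end{pmatrix} \begin{pmatrix} x_{1}\\ x_{2}\\ x_{3}\end{pmatrix} =\begin{pmatrix} u_{4}\\ u_{3}\\ u_{2}\end{pmatrix} \] satisfies $|x_{1}|+|x_{2}|+|x_{3}|<1$. Then $(\mathbf{D}_{n})_{n\geq1}$ is a positive recurrent Markov chain with period 2 on $\mathbb{Z}^{4}$.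
   Context: Two treatments (1 and 2) are compared; patients arrive sequentially. There are $I$ covariates, covariate $i$ having $m_i$ levels; a stratum is a covariate profile $(k_1,\ldots,k_I)$ and a margin $(i;k_i)$ is the set of patients whose $i$th covariate is at level $k_i$. The covariate profiles $Z_1,Z_2,\ldots$ are i.i.d. multinomial over the strata. After $n-1$ patients, $D_{n-1}$, $D_{n-1}(i;k_i)$ and $D_{n-1}(k_1,\ldots,k_I)$ denote (number in treatment 1) minus (number in treatment 2) overall, on margin $(i;k_i)$, and within stratum $(k_1,\ldots,k_I)$. If the $n$th patient falls in stratum $(k_1^*,\ldots,k_I^* )$, let $\mathit{Imb}_n^{(1)}=w_o[D_{n-1}+1]^2+\sum_{i=1}^I w_{m,i}[D_{n-1}(i;k_i^* )+1]^2+w_s[D_{n-1}(k_1^*,\ldots,k_I^* )+1]^2$ be the weighted imbalance if the patient is assigned to treatment 1, and $\mathit{Imb}_n^{(2)}$ the analogous quantity with $-1$ in place of $+1$. The first patient is assigned to treatment 1 with probability $1/2$; for $n>1$, the $n$th patient is assigned to treatment 1 with probability $q$ if $\mathit{Imb}_n^{(1)}>\mathit{Imb}_n^{(2)}$, $p$ if $\mathit{Imb}_n^{(1)}<\mathit{Imb}_n^{(2)}$, and $1/2$ otherwise, where $0<q<p<1$, $p+q=1$. $\mathbf{D}_n=[D_n(k_1,\ldots,k_I)]$ is the array of within-stratum differences after $n$ patients; $(\mathbf{D}_n)_{n\ge1}$ is a Markov chain on $\mathbb{Z}^m$, $m=\prod_i m_i$. *)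

(* Defs.v *)
From HB Require Import structures.
From mathcomp Require Import all_boot all_order all_algebra.
From mathcomp Require Import all_classical all_reals.
From mathcomp Require Import topology normedtype sequences.
Set Implicit Arguments. Unset Strict Implicit. Unset Printing Implicit Defensive.
Import Order.TTheory GRing.Theory Num.Theory.
Import numFieldNormedType.Exports.
Local Open Scope classical_set_scope.
Local Open Scope ring_scope.

(* Two covariates with two levels each: a stratum is a pair (k1,k2). *)
Definition stratum := ('I_2 * 'I_2)%type.

(* The state D_n : within-stratum differences (#trt1 - #trt2), an element of Z^4. *)
Definition state := {ffun stratum -> int}.

Definition Dtot (D : state) : int := \sum_(s : stratum) D s.
Definition Dmarg1 (D : state) (k : 'I_2) : int := \sum_(j < 2) D (k, j).
Definition Dmarg2 (D : state) (k : 'I_2) : int := \sum_(i < 2) D (i, k).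

Section Design.
Variable R : realType.
Variables (wo wm1 wm2 ws p : R) (pi : stratum -> R).

(* weighted imbalance if the new patient (in stratum s) gets +t (t = 1: trt 1, t = -1: trt 2) *)
Definition Imb (D : state) (s : stratum) (t : int) : R :=
  wo * ((Dtot D + t)%:~R) ^+ 2
  + wm1 * ((Dmarg1 D s.1 + t)%:~R) ^+ 2
  + wm2 * ((Dmarg2 D s.2 + t)%:~R) ^+ 2
  + ws * ((D s + t)%:~R) ^+ 2.

Definition prob1 (D : state) (s : stratum) : R :=
  if Imb D s 1 > Imb D s (-1) then 1 - p
  else if Imb D s 1 < Imb D s (-1) then p
  else 1 / 2.

Definition step (s : stratum) (t : int) (D : state) : state :=
  [ffun s' => if s' == s then D s' + t else D s'].

Definition trans (x y : state) : R :=
  \sum_(s : stratum)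
     pi s * (prob1 x s * (y == step s 1 x)%:R
             + (1 - prob1 x s) * (y == step s (-1) x)%:R).

(* the (finitely many, pairwise distinct) possible successors of x;
   trans x y = 0 for y outside this list *)
Definition succs (x : state) : seq state :=
  [seq step st.1 st.2 x | st <- [seq ((s : stratum), t) | s <- enum [set: stratum], t <- [:: (1:int); -1]]].

Fixpoint Pn (n : nat) (x y : state) : R :=
  match n with
  | 0 => (x == y)%:R
  | n'.+1 => \sum_(z <- succs x) trans x z * Pn n' z y
  end.

(* first-passage probabilities: F n x y = P_x(first visit to y at time n), n >= 1 *)
Fixpoint Fn (n : nat) (x y : state) : R :=
  match n with
  | 0 => 0
  | 1 => trans x y
  | n'.+1 => \sum_(z <- succs x | z != y) trans x z * Fn n' z y
  end.

Definition irreducible : Prop :=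
  forall x y : state, exists n, 0 < Pn n x y.

Definition recurrent (x : state) : Prop :=
  series (fun n => Fn n x x) @ \oo --> (1 : R).

Definition positive_recurrent (x : state) : Prop :=
  recurrent x /\ cvg (series (fun n => n%:R * Fn n x x) @ \oo).

Definition has_period (d : nat) (x : state) : Prop :=
  (forall n, (0 < n)%N -> 0 < Pn n x x -> (d %| n)%N) /\
  (forall d', (forall n, (0 < n)%N -> 0 < Pn n x x -> (d' %| n)%N) -> (d' %| d)%N).

Definition pos_rec_chain_period (d : nat) : Prop :=
  irreducible /\ (forall x, positive_recurrent x) /\ (forall x, has_period d x).

End Design.

(* Main.v *)
Require Import Defs.
From HB Require Import structures.
From mathcomp Require Import all_boot all_order all_algebra.
From mathcomp Require Import all_classical all_reals.
From mathcomp Require Import topology normedtype sequences.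
From mathcomp Require Import ring lra zify.
Import Order.TTheory GRing.Theory Num.Theory.
Import numFieldNormedType.Exports.
Local Open Scope classical_set_scope.
Local Open Scope ring_scope.

Section Main.
Variable R : realType.
Variables (wo wm1 wm2 ws p : R) (pi : stratum -> R).

Definition E (z : state) (F : state -> R) : R :=
  \sum_(w <- succs z) trans wo wm1 wm2 ws p pi z w * F w.

Lemma succs_sum z (G : state -> R) :
  \sum_(w <- succs z) G w = \sum_s (G (step s 1 z) + G (step s (-1) z)).
Proof.
rewrite /succs big_map big_allpairs big_enum /=.
rewrite (eq_bigl xpredT) => [|s]; last by rewrite in_setT.
by apply: eq_bigr => s _; rewrite !big_cons big_nil addr0.
Qed.

Lemma step_eq s s' (t t' : int) z : t != 0 -> t' != 0 ->
  (step s t z == step s' t' z) = (s == s') && (t == t').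
Proof.
move=> Ht Ht'; apply/eqP/andP => [H|[/eqP <- /eqP <-]] //.
have := congr1 (fun f : state => f s) H; rewrite !ffunE eqxx.
case: (eqVneq s s') => [Es|ns].
  subst s'; move/addrI => ->; by rewrite !eqxx.
move/eqP; rewrite -subr_eq0 addrC addKr => /eqP Ht0.
by move: Ht; rewrite Ht0 eqxx.
Qed.

Lemma trans_step1 z s :
  trans wo wm1 wm2 ws p pi z (step s 1 z) = pi s * prob1 wo wm1 wm2 ws p z s.
Proof.
rewrite /trans (bigD1 s) //= big1 ?addr0.
  by rewrite !step_eq // eqxx /= mulr1 mulr0 addr0.
move=> s' ns; have ns' : (s == s') = false by rewrite eq_sym (negbTE ns).
rewrite !step_eq // ns' /=; by rewrite !mulr0 addr0 mulr0.
Qed.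

Lemma trans_stepm1 z s :
  trans wo wm1 wm2 ws p pi z (step s (-1) z) = pi s * (1 - prob1 wo wm1 wm2 ws p z s).
Proof.
rewrite /trans (bigD1 s) //= big1 ?addr0.
  by rewrite !step_eq // eqxx /= mulr1 mulr0 add0r.
move=> s' ns; have ns' : (s == s') = false by rewrite eq_sym (negbTE ns).
rewrite !step_eq // ns' /=; by rewrite !mulr0 addr0 mulr0.
Qed.

Lemma EE z F : E z F = \sum_s (pi s * prob1 wo wm1 wm2 ws p z s * F (step s 1 z)
   + pi s * (1 - prob1 wo wm1 wm2 ws p z s) * F (step s (-1) z)).
Proof. by rewrite /E succs_sum; apply: eq_bigr => s _; rewrite trans_step1 trans_stepm1. Qed.


Lemma E_add z F G : E z (fun w => F w + G w) = E z F + E z G.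
Proof. by rewrite /E -big_split /=; apply: eq_bigr => w _; rewrite mulrDr. Qed.

Lemma E_sub z F G : E z (fun w => F w - G w) = E z F - E z G.
Proof. by rewrite /E -sumrB /=; apply: eq_bigr => w _; rewrite mulrBr. Qed.

Lemma E_scale z c F : E z (fun w => c * F w) = c * E z F.
Proof. by rewrite /E mulr_sumr; apply: eq_bigr => w _; rewrite mulrCA. Qed.

Lemma E_sum z n (F : nat -> state -> R) :
  E z (fun w => \sum_(k < n) F k w) = \sum_(k < n) E z (F k).
Proof.
rewrite /E; under eq_bigr do rewrite mulr_sumr.
by rewrite exchange_big.
Qed.

Hypothesis Hq : 0 < 1 - p.
Hypothesis Hqp : 1 - p < p.
Hypothesis Hpi : forall s, 0 < pi s.
Hypothesis Hsum : \sum_s pi s = 1.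

Lemma prob_lb z s : 1 - p <= prob1 wo wm1 wm2 ws p z s.
Proof. have := Hqp; have := Hq; rewrite /prob1; case: ifP => _; first lra. case: ifP => _; lra. Qed.

Lemma prob_ub z s : prob1 wo wm1 wm2 ws p z s <= p.
Proof. have := Hqp; have := Hq; rewrite /prob1; case: ifP => _; first lra. case: ifP => _; lra. Qed.

Lemma E_const z c : E z (fun _ => c) = c.
Proof.
rewrite EE; transitivity (\sum_s pi s * c); last by rewrite -mulr_suml Hsum mul1r.
by apply: eq_bigr => s _; ring.
Qed.

Lemma E_ge0 z F : (forall w, 0 <= F w) -> 0 <= E z F.
Proof.
move=> HF; rewrite EE; apply: sumr_ge0 => s _.
have := prob_lb z s; have := prob_ub z s; have := Hpi s.
have := HF (step s 1 z); have := HF (step s (-1) z).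
have := Hq; move=> h0 h1 h2 h3 h4 h5.
apply: addr_ge0; apply: mulr_ge0 => //; apply: mulr_ge0; lra.
Qed.

Lemma E_le z F G : (forall w, F w <= G w) -> E z F <= E z G.
Proof.
move=> H; rewrite -subr_ge0 -E_sub; apply: E_ge0 => w; rewrite subr_ge0; exact: H.
Qed.

Lemma E_ge1 z F s : (forall w, 0 <= F w) ->
  pi s * (1 - p) * F (step s 1 z) <= E z F.
Proof.
move=> HF; rewrite EE (bigD1 s) //=.
have R1 : 0 <= \sum_(i | i != s) (pi i * prob1 wo wm1 wm2 ws p z i * F (step i 1 z) +
   pi i * (1 - prob1 wo wm1 wm2 ws p z i) * F (step i (-1) z)).
  apply: sumr_ge0 => i _.
  have := prob_lb z i; have := prob_ub z i; have := Hpi i.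
  have := HF (step i 1 z); have := HF (step i (-1) z).
  have := Hq; move=> h0 h1 h2 h3 h4 h5.
  apply: addr_ge0; apply: mulr_ge0 => //; apply: mulr_ge0; lra.
have := prob_lb z s; have := prob_ub z s; have := Hpi s.
have := HF (step s 1 z); have := HF (step s (-1) z).
have := Hq; move=> h0 h1 h2 h3 h4 h5.
have: pi s * (1 - p) * F (step s 1 z) <= pi s * prob1 wo wm1 wm2 ws p z s * F (step s 1 z).
  by apply: ler_wpM2r => //; apply: ler_wpM2l; lra.
have: 0 <= pi s * (1 - prob1 wo wm1 wm2 ws p z s) * F (step s (-1) z).
  by apply: mulr_ge0 => //; apply: mulr_ge0; lra.
lra.
Qed.

Lemma E_gem1 z F s : (forall w, 0 <= F w) ->
  pi s * (1 - p) * F (step s (-1) z) <= E z F.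
Proof.
move=> HF; rewrite EE (bigD1 s) //=.
have R1 : 0 <= \sum_(i | i != s) (pi i * prob1 wo wm1 wm2 ws p z i * F (step i 1 z) +
   pi i * (1 - prob1 wo wm1 wm2 ws p z i) * F (step i (-1) z)).
  apply: sumr_ge0 => i _.
  have := prob_lb z i; have := prob_ub z i; have := Hpi i.
  have := HF (step i 1 z); have := HF (step i (-1) z).
  have := Hq; move=> h0 h1 h2 h3 h4 h5.
  apply: addr_ge0; apply: mulr_ge0 => //; apply: mulr_ge0; lra.
have := prob_lb z s; have := prob_ub z s; have := Hpi s.
have := HF (step s 1 z); have := HF (step s (-1) z).
have := Hq; move=> h0 h1 h2 h3 h4 h5.
have: pi s * (1 - p) * F (step s (-1) z) <= pi s * (1 - prob1 wo wm1 wm2 ws p z s) * F (step s (-1) z).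
  by apply: ler_wpM2r => //; apply: ler_wpM2l; lra.
have: 0 <= pi s * prob1 wo wm1 wm2 ws p z s * F (step s 1 z).
  by apply: mulr_ge0 => //; apply: mulr_ge0; lra.
lra.
Qed.


Lemma trans_E z y : trans wo wm1 wm2 ws p pi z y = E z (fun w => (w == y)%:R).
Proof.
rewrite EE /trans; apply: eq_bigr => s _.
by rewrite mulrDr !mulrA ![y == _]eq_sym.
Qed.

Fixpoint T (y : state) (n : nat) (z : state) : R :=
  match n with
  | 0 => 1
  | n'.+1 => E z (fun w => (w != y)%:R * T y n' w)
  end.

Lemma Fn_T y n z : Fn wo wm1 wm2 ws p pi n.+1 z y = T y n z - T y n.+1 z.
Proof.
elim: n z => [|n IH] z.
  rewrite /= trans_E; transitivity (E z (fun w => 1 - (w != y)%:R * 1)); last by rewrite E_sub E_const.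
  congr E; apply: funext => w.
  by case: (w == y); rewrite /= ?mulr1 ?subrr ?subr0.
rewrite [LHS]/= -big_filter.
have -> : \sum_(i <- [seq i <- succs z | i != y])
    trans wo wm1 wm2 ws p pi z i * Fn wo wm1 wm2 ws p pi n.+1 i y =
  E z (fun w => (w != y)%:R * (T y n w - T y n.+1 w)).
  rewrite big_filter big_mkcond /E; apply: eq_bigr => w _.
  by case: (w != y); rewrite ?mul1r ?mul0r ?mulr0 // IH.
by rewrite -E_sub; congr E; apply: funext => w; rewrite mulrBr.
Qed.

Lemma T_ge0 y n z : 0 <= T y n z.
Proof.
elim: n z => [|n IH] z /=; first exact: ler01.
by apply: E_ge0 => w; apply: mulr_ge0 => //; exact: ler0n.
Qed.



Lemma T_noninc y n z : T y n.+1 z <= T y n z.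
Proof.
elim: n z => [|n IH] z.
  rewrite /=; apply: (@le_trans _ _ (E z (fun _ => 1))); last by rewrite E_const.
  apply: E_le => w.
  by case: (w != y); rewrite /= ?mulr1 ?mul0r ?ler01 ?lexx.
rewrite /=; apply: E_le => w; apply: ler_wpM2l; [exact: ler0n| exact: IH].
Qed.

Lemma T_mono y m n z : (m <= n)%N -> T y n z <= T y m z.
Proof.
elim: n => [|n IH]; first by rewrite leqn0 => /eqP ->.
rewrite leq_eqVlt => /orP [/eqP -> //|]; rewrite ltnS => /IH.
exact: le_trans (T_noninc y n z).
Qed.

Lemma Fn_ge0 y n z : 0 <= Fn wo wm1 wm2 ws p pi n z y.
Proof.
case: n => [|n]; first exact: lexx.
by rewrite Fn_T subr_ge0 T_noninc.
Qed.

Section Lyap.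
Variables (y : state) (V : state -> R).
Hypothesis V_ge0 : forall w, 0 <= V w.
Hypothesis V_drift : forall z, z != y -> 1 + E z V <= V z.

Lemma U_expand N z : \sum_(k < N.+1) T y k z =
   1 + E z (fun w => (w != y)%:R * \sum_(k < N) T y k w).
Proof.
rewrite big_ord_recl /=; congr (_ + _).
transitivity (\sum_(k < N) E z (fun w => (w != y)%:R * T y k w)).
  by apply: eq_bigr.
rewrite -(E_sum z N (fun k w => (w != y)%:R * T y k w)).
congr E; apply: funext => w; by rewrite mulr_sumr.
Qed.

Lemma U_boundV N w : w != y -> \sum_(k < N) T y k w <= V w.
Proof.
elim: N w => [|N IH] w nw; first by rewrite big_ord0.
rewrite U_expand; apply: (le_trans _ (V_drift w nw)); rewrite lerD2l.
apply: E_le => v; case: (eqVneq v y) => [->|nv]; first by rewrite mul0r.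
by rewrite mul1r; exact: IH.
Qed.

Lemma U_bound N : \sum_(k < N) T y k y <= 1 + E y V.
Proof.
case: N => [|N].
  rewrite big_ord0; apply: addr_ge0; [exact: ler01| exact: E_ge0].
rewrite U_expand lerD2l; apply: E_le => v; case: (eqVneq v y) => [->|nv].
  by rewrite mul0r.
by rewrite mul1r; exact: U_boundV.
Qed.

Lemma NT_le_U N : N%:R * T y N y <= \sum_(k < N) T y k y.
Proof.
have : \sum_(k < N) T y N y <= \sum_(k < N) T y k y.
  apply: ler_sum => k _; apply: T_mono; exact: ltnW.
by rewrite sumr_const card_ord mulr_natl.
Qed.

Lemma series_F N : series (fun n => Fn wo wm1 wm2 ws p pi n y y) N.+1 = 1 - T y N y.
Proof.
elim: N => [|N IH]; first by rewrite seriesSr /series /= big_geq // add0r subrr.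
by rewrite seriesSr IH Fn_T; ring.
Qed.

Lemma series_nF N : series (fun n => n%:R * Fn wo wm1 wm2 ws p pi n y y) N.+1 =
  \sum_(k < N) T y k y - N%:R * T y N y.
Proof.
elim: N => [|N IH]; first by rewrite seriesSr /series /= big_geq // big_ord0 !mul0r subrr addr0.
rewrite seriesSr IH Fn_T big_ord_recr /= -natr1; ring.
Qed.

Lemma TN_bound N : N%:R * T y N y <= 1 + E y V.
Proof. exact: le_trans (NT_le_U N) (U_bound N). Qed.

Lemma rec_y : recurrent wo wm1 wm2 ws p pi y.
Proof.
rewrite /recurrent -cvg_shiftS.
apply/cvgrPdist_le => eps eps0.
set C := 1 + E y V.
have C0 : 0 <= C by apply: addr_ge0; [exact: ler01| exact: E_ge0].
pose N0 := (Num.Def.trunc (C / eps)).+1.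
have HN0 : C / eps < N0%:R by exact: truncnS_gt.
near=> n.
have Hn : (N0 <= n)%N by near: n; exists N0.
rewrite /= series_F opprB addrC subrK ger0_norm; last exact: T_ge0.
have HT := TN_bound n; rewrite -/C in HT.
have Hn' : N0%:R <= n%:R :> R by rewrite ler_nat.
have npos : 0 < n%:R :> R by rewrite ltr0n; apply: leq_trans Hn.
have : C < eps * n%:R.
  rewrite -ltr_pdivrMl // mulrC; exact: (lt_le_trans HN0).
move=> h.
have : n%:R * T y n y < n%:R * eps by apply: (le_lt_trans HT); rewrite mulrC.
by rewrite ltr_pM2l // => /ltW.
Unshelve. all: by end_near.
Qed.

Lemma posrec_y : positive_recurrent wo wm1 wm2 ws p pi y.
Proof.
split; first exact: rec_y.
apply: nondecreasing_is_cvgn.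
  move=> m n mn; rewrite /series /=; apply: nondecreasing_series => // k _ _.
  apply: mulr_ge0; [exact: ler0n| exact: Fn_ge0].
exists (1 + E y V) => _ [[|N] _ <-].
  rewrite /series /= big_geq //; apply: addr_ge0; [exact: ler01| exact: E_ge0].
rewrite series_nF; apply: le_trans (U_bound N).
rewrite lerBlDr lerDl; apply: mulr_ge0; [exact: ler0n| exact: T_ge0].
Qed.

End Lyap.


Definition o0 : 'I_2 := @Ordinal 2 0 isT.
Definition o1 : 'I_2 := @Ordinal 2 1 isT.

Lemma ord2_cases (i : 'I_2) : i = o0 \/ i = o1.
Proof. case: i => [[|[|//]] Hi]; [left|right]; exact: val_inj. Qed.

Lemma strat_cases (P : stratum -> Prop) :
  P (o0,o0) -> P (o0,o1) -> P (o1,o0) -> P (o1,o1) -> forall s, P s.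
Proof.
move=> H1 H2 H3 H4 [i j].
by case: (ord2_cases i) => ->; case: (ord2_cases j) => ->.
Qed.

Lemma sum2 (G : 'I_2 -> R) : \sum_(k < 2) G k = G o0 + G o1.
Proof.
rewrite big_ord_recr big_ord_recl big_ord0 /= addr0.
by congr (G _ + G _); apply: val_inj.
Qed.

Lemma sum4 (G : stratum -> R) :
  \sum_(s : stratum) G s = G (o0,o0) + G (o0,o1) + G (o1,o0) + G (o1,o1).
Proof.
transitivity (\sum_(i < 2) \sum_(j < 2) G (i,j)).
  by rewrite pair_big; apply: eq_bigr => [[i j]] _.
by rewrite sum2 sum2 sum2; ring.
Qed.

Lemma sum2i (G : 'I_2 -> int) : \sum_(k < 2) G k = G o0 + G o1.
Proof.
rewrite big_ord_recr big_ord_recl big_ord0 /= addr0.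
by congr (G _ + G _); apply: val_inj.
Qed.

Lemma sum4i (G : stratum -> int) :
  \sum_(s : stratum) G s = G (o0,o0) + G (o0,o1) + G (o1,o0) + G (o1,o1).
Proof.
transitivity (\sum_(i < 2) \sum_(j < 2) G (i,j)).
  by rewrite pair_big; apply: eq_bigr => [[i j]] _.
rewrite sum2i sum2i sum2i; by rewrite !addrA.
Qed.

Lemma step_app s t z s' : step s t z s' = z s' + (if s' == s then t else 0).
Proof. by rewrite ffunE; case: ifP => _; rewrite ?addr0. Qed.

Definition Lf (z : state) (s : stratum) : R :=
  wo * (Dtot z)%:~R + wm1 * (Dmarg1 z s.1)%:~R + wm2 * (Dmarg2 z s.2)%:~R + ws * (z s)%:~R.

Definition Qf (z : state) : R :=
  wo * (Dtot z)%:~R ^+ 2 + wm1 * \sum_(k < 2) (Dmarg1 z k)%:~R ^+ 2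
  + wm2 * \sum_(k < 2) (Dmarg2 z k)%:~R ^+ 2 + ws * \sum_s (z s)%:~R ^+ 2.

Lemma Q_step s t z : Qf (step s t z) = Qf z + (Imb wo wm1 wm2 ws z s t - Imb wo wm1 wm2 ws z s 0).
Proof.
rewrite /Qf /Imb /Dtot /Dmarg1 /Dmarg2 !sum2 !sum4i !sum2i !sum4 !step_app.
move: s; apply: strat_cases; rewrite /= !intrD !mulr0z !addr0.
all: move: (z (o0,o0))%:~R (z (o0,o1))%:~R (z (o1,o0))%:~R (z (o1,o1))%:~R (t%:~R) => a b c d e.
1: ring. 1: ring. 1: ring. 1: ring.
Qed.

Lemma Q_L z : Qf z = \sum_s (z s)%:~R * Lf z s.
Proof.
rewrite /Qf /Lf /Dtot /Dmarg1 /Dmarg2 !sum2 !sum4i !sum2i !sum4 /= !sum2i !intrD.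
move: (z (o0,o0))%:~R (z (o0,o1))%:~R (z (o1,o0))%:~R (z (o1,o1))%:~R => a b c d.
ring.
Qed.


Definition dist (z y : state) : nat := (\sum_s absz (z s - y s)%R)%N.

Lemma dist_eq0 z y : dist z y = 0%N -> z = y.
Proof.
rewrite /dist => /eqP; rewrite sum_nat_eq0 => /forallP H.
apply/ffunP => s; have := H s; rewrite /= absz_eq0 subr_eq0 => /eqP //.
Qed.

Lemma exists_neq (z y : state) : z != y -> exists s, z s != y s.
Proof.
move=> nzy.
have : [exists s, z s != y s].
  apply: contraNT nzy => /existsPn H.
  by apply/eqP/ffunP => s; apply/eqP; have := H s; rewrite negbK.
by case/existsP => s hs; exists s.
Qed.

Lemma dist_step (z y : state) : z != y -> exists s,
  (dist (step s 1 z) y).+1 = dist z y \/ (dist (step s (-1) z) y).+1 = dist z y.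
Proof.
move=> /exists_neq [s ns]; exists s.
set r := (\sum_(s' | s' != s) absz (z s' - y s')%R)%N.
have Hd : dist z y = (absz (z s - y s)%R + r)%N by rewrite /dist (bigD1 s).
have Ht : forall t, dist (step s t z) y = (absz (z s + t - y s)%R + r)%N.
  move=> t; rewrite /dist (bigD1 s) // step_app eqxx; congr (_ + _)%N.
  apply: eq_bigr => s' ns'; by rewrite step_app (negbTE ns') addr0.
rewrite !Ht Hd.
clearbody r; clear Hd Ht.
move: (z s) (y s) ns => a b nab.
case: (ltrP a b) => h; [left|right]; first lia.
have h' : (b < a)%R by rewrite lt_neqAle h eq_sym nab.
lia.
Qed.

Lemma Dtot_step s t z : Dtot (step s t z) = (Dtot z + t)%R.
Proof.
rewrite /Dtot (bigD1 s) //= [in RHS](bigD1 s) //= step_app eqxx.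
rewrite (eq_bigr (fun s' => z s')); last by move=> s' ns'; rewrite step_app (negbTE ns') addr0.
by rewrite addrAC.
Qed.

Lemma Pn_ge0 n x y : 0 <= Pn wo wm1 wm2 ws p pi n x y.
Proof.
elim: n x => [|n IH] x /=; first exact: ler0n.
exact: (E_ge0 x (fun w => Pn wo wm1 wm2 ws p pi n w y)).
Qed.

Lemma PnS n x y : Pn wo wm1 wm2 ws p pi n.+1 x y = E x (fun w => Pn wo wm1 wm2 ws p pi n w y).
Proof. by []. Qed.

Lemma reach y k x : dist x y = k -> exists n, 0 < Pn wo wm1 wm2 ws p pi n x y.
Proof.
elim: k x => [|k IH] x hd.
  by exists 0%N; rewrite (dist_eq0 _ _ hd) /= eqxx ltr01.
have nxy : x != y by apply: contraTneq isT => exy; move: hd; rewrite exy /dist big1 // => s _; rewrite subrr.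
have [s [h|h]] := dist_step _ _ nxy.
- have [n Hn] : exists n, 0 < Pn wo wm1 wm2 ws p pi n (step s 1 x) y.
    by apply: IH; move: h; rewrite hd => -[].
  exists n.+1; rewrite PnS.
  apply: lt_le_trans (E_ge1 x (fun w => Pn wo wm1 wm2 ws p pi n w y) s _); last by move=> w; exact: Pn_ge0.
  by apply: mulr_gt0 => //; apply: mulr_gt0.
- have [n Hn] : exists n, 0 < Pn wo wm1 wm2 ws p pi n (step s (-1) x) y.
    by apply: IH; move: h; rewrite hd => -[].
  exists n.+1; rewrite PnS.
  apply: lt_le_trans (E_gem1 x (fun w => Pn wo wm1 wm2 ws p pi n w y) s _); last by move=> w; exact: Pn_ge0.
  by apply: mulr_gt0 => //; apply: mulr_gt0.
Qed.

Lemma irred : irreducible wo wm1 wm2 ws p pi.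
Proof. move=> x y; exact: (reach y (dist x y) x erefl). Qed.

Lemma parity n x y : Pn wo wm1 wm2 ws p pi n x y != 0 ->
  exists k : int, (n%:Z + Dtot x - Dtot y = 2 * k)%R.
Proof.
elim: n x => [|n IH] x /=.
  by case: (eqVneq x y) => [->|_]; [exists 0; rewrite addrK mulr0| rewrite eqxx].
case: (pselect (exists s, Pn wo wm1 wm2 ws p pi n (step s 1 x) y != 0 \/
                           Pn wo wm1 wm2 ws p pi n (step s (-1) x) y != 0)).
  move=> [s [/IH [k hk]|/IH [k hk]]].
    exists k; rewrite -hk Dtot_step -addn1 PoszD; ring.
  exists (k + 1); rewrite mulrDr -hk Dtot_step -addn1 PoszD; ring.
move=> Hno; rewrite -/(E x _) EE big1 ?eqxx // => s _.
have [h1 h2] : Pn wo wm1 wm2 ws p pi n (step s 1 x) y = 0 /\ Pn wo wm1 wm2 ws p pi n (step s (-1) x) y = 0.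
  split; apply/eqP; apply: contraT => hne; case: Hno; exists s; by [left|right].
by rewrite h1 h2 !mulr0 addr0.
Qed.

Lemma step_back s x : step s (-1) (step s 1 x) = x.
Proof.
apply/ffunP => s'; rewrite !step_app; case: ifP => _; last by rewrite !addr0.
by rewrite addrK.
Qed.

Lemma period2 x : has_period wo wm1 wm2 ws p pi 2 x.
Proof.
split.
  move=> n n0 /lt0r_neq0 /parity [k]; rewrite addrK => h; lia.
move=> d H; apply: H => //.
set s := (o0, o0).
rewrite PnS.
apply: lt_le_trans (E_ge1 x (fun w => Pn wo wm1 wm2 ws p pi 1 w x) s _); last by move=> w; exact: Pn_ge0.
apply: mulr_gt0; first by apply: mulr_gt0.
rewrite PnS.
apply: lt_le_trans (E_gem1 _ (fun w => Pn wo wm1 wm2 ws p pi 0 w x) s _); last by move=> w; exact: Pn_ge0.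
by rewrite /= step_back eqxx mulr1; apply: mulr_gt0.
Qed.


Hypothesis Hwo : 0 <= wo.
Hypothesis Hwm1 : 0 <= wm1.
Hypothesis Hwm2 : 0 <= wm2.
Hypothesis Hws : 0 < ws.
Hypothesis HW : wo + wm1 + wm2 + ws = 1.

Lemma Imb_d1 z s : Imb wo wm1 wm2 ws z s 1 = Imb wo wm1 wm2 ws z s 0 + 2 * Lf z s + 1.
Proof.
suff -> : Imb wo wm1 wm2 ws z s 1 = Imb wo wm1 wm2 ws z s 0 + 2 * Lf z s + (wo + wm1 + wm2 + ws) by rewrite HW.
rewrite /Imb /Lf !intrD !addr0 !mulr1z.
move: (Dtot z)%:~R (Dmarg1 z s.1)%:~R (Dmarg2 z s.2)%:~R (z s)%:~R => a b c d.
ring.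
Qed.

Lemma Imb_dm1 z s : Imb wo wm1 wm2 ws z s (-1) = Imb wo wm1 wm2 ws z s 0 - 2 * Lf z s + 1.
Proof.
suff -> : Imb wo wm1 wm2 ws z s (-1) = Imb wo wm1 wm2 ws z s 0 - 2 * Lf z s + (wo + wm1 + wm2 + ws) by rewrite HW.
rewrite /Imb /Lf !intrD !addr0 !intrN !mulr1z.
move: (Dtot z)%:~R (Dmarg1 z s.1)%:~R (Dmarg2 z s.2)%:~R (z s)%:~R => a b c d.
ring.
Qed.

Lemma drift_s z s :
  prob1 wo wm1 wm2 ws p z s * Qf (step s 1 z) + (1 - prob1 wo wm1 wm2 ws p z s) * Qf (step s (-1) z)
  = Qf z + 1 - 2 * (2 * p - 1) * `|Lf z s|.
Proof.
rewrite !Q_step /prob1 Imb_d1 Imb_dm1.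
move: (Imb wo wm1 wm2 ws z s 0) (Lf z s) (Qf z) => I0 L Q.
case: ifP => h1.
  have hL : 0 < L by lra.
  rewrite gtr0_norm //; ring.
case: ifP => h2.
  have hL : L < 0 by lra.
  rewrite ltr0_norm //; ring.
have hL : L = 0.
  move/negbT: h1; move/negbT: h2; rewrite -!leNgt => h2 h1; lra.
rewrite hL normr0; lra.
Qed.

Lemma EQ z : E z Qf = Qf z + \sum_s pi s * (1 - 2 * (2 * p - 1) * `|Lf z s|).
Proof.
rewrite EE.
transitivity (\sum_s (pi s * Qf z + pi s * (1 - 2 * (2 * p - 1) * `|Lf z s|))).
  apply: eq_bigr => s _; rewrite -!mulrA -mulrDr drift_s; ring.
by rewrite big_split /= -mulr_suml Hsum mul1r.
Qed.

Lemma Q_ge (z : state) : ws * \sum_s (z s)%:~R ^+ 2 <= Qf z.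
Proof.
rewrite /Qf lerDr; have := Hwo; have := Hwm1; have := Hwm2 => h1 h2 h3.
apply: addr_ge0; first apply: addr_ge0; apply: mulr_ge0 => //;
  (try exact: sqr_ge0); apply: sumr_ge0 => k _; exact: sqr_ge0.
Qed.

Lemma Q_ge0 (z : state) : 0 <= Qf z.
Proof.
apply: le_trans (Q_ge z); apply: mulr_ge0; first exact: ltW.
apply: sumr_ge0 => s _; exact: sqr_ge0.
Qed.

Lemma S_bound (z : state) : ws * \sum_s `|(z s)%:~R : R| <= 4 * \sum_s `|Lf z s|.
Proof.
have H1 := Q_ge z; rewrite Q_L !sum4 in H1 *.
move: H1.
move: ((z (o0,o0))%:~R : R) ((z (o0,o1))%:~R : R) ((z (o1,o0))%:~R : R) ((z (o1,o1))%:~R : R) => a b c d.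
move: (Lf z (o0,o0)) (Lf z (o0,o1)) (Lf z (o1,o0)) (Lf z (o1,o1)) => la lb lc ld H.
set S := `|a| + `|b| + `|c| + `|d|.
set X := `|la| + `|lb| + `|lc| + `|ld|.
have hS : 0 <= S by rewrite /S; do ! apply: addr_ge0 => //.
have hX : 0 <= X by rewrite /X; do ! apply: addr_ge0 => //.
have key : forall u v : R, u * v <= S * `|v| -> True by [].
have hu : forall u v : R, `|u| <= S -> u * v <= S * `|v|.
  move=> u v hu; apply: le_trans (ler_norm (u * v)) _; rewrite normrM.
  by apply: ler_wpM2r.
have ha : `|a| <= S by rewrite /S; have := normr_ge0 b; have := normr_ge0 c; have := normr_ge0 d; lra.
have hb : `|b| <= S by rewrite /S; have := normr_ge0 a; have := normr_ge0 c; have := normr_ge0 d; lra.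
have hc : `|c| <= S by rewrite /S; have := normr_ge0 a; have := normr_ge0 b; have := normr_ge0 d; lra.
have hd : `|d| <= S by rewrite /S; have := normr_ge0 a; have := normr_ge0 b; have := normr_ge0 c; lra.
have h2 : a * la + b * lb + c * lc + d * ld <= S * X.
  have := hu _ la ha; have := hu _ lb hb; have := hu _ lc hc; have := hu _ ld hd.
  rewrite /X; lra.
have h3 : S ^+ 2 <= 4 * (a ^+ 2 + b ^+ 2 + c ^+ 2 + d ^+ 2).
  rewrite -(real_normK (num_real a)) -(real_normK (num_real b)).
  rewrite -(real_normK (num_real c)) -(real_normK (num_real d)) /S.
  move: `|a| `|b| `|c| `|d| => a' b' c' d'.
  have := sqr_ge0 (a' - b'); have := sqr_ge0 (a' - c'); have := sqr_ge0 (a' - d').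
  have := sqr_ge0 (b' - c'); have := sqr_ge0 (b' - d'); have := sqr_ge0 (c' - d').
  nra.
have h4 : ws * S ^+ 2 <= 4 * (S * X).
  have := Hws; nra.
case: (eqVneq S 0) => [->|nS]; first by rewrite mulr0; apply: mulr_ge0.
have Sp : 0 < S by rewrite lt_neqAle eq_sym nS hS.
rewrite -(ler_pM2l Sp); move: h4; rewrite expr2; lra.
Qed.


Lemma min_pi : exists m, 0 < m /\ forall s, m <= pi s.
Proof.
exists (Num.min (Num.min (pi (o0,o0)) (pi (o0,o1))) (Num.min (pi (o1,o0)) (pi (o1,o1)))).
split; first by rewrite !lt_min !Hpi.
apply: strat_cases; rewrite !ge_min lexx ?orbT //.
Qed.

Lemma dist_bound (z y : state) :
  (dist z y)%:R <= \sum_s `|(z s)%:~R : R| + \sum_s `|(y s)%:~R : R|.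
Proof.
rewrite /dist natr_sum -big_split /=; apply: ler_sum => s _.
rewrite natr_absz intr_norm rmorphB /=; exact: ler_normB.
Qed.

Lemma psi_drift (m th : R) (y z : state) : 0 < m -> (forall s, m <= pi s) ->
  m * (1 - p) = 2 * th -> 0 < th -> z != y ->
  2 * th ^+ (dist z y) <= E z (fun w => th ^+ (dist w y)).
Proof.
move=> m0 hm hth th0 nzy.
have Hge : forall w : state, 0 <= th ^+ (dist w y) by move=> w; apply: exprn_ge0; exact: ltW.
have [s [h|h]] := dist_step _ _ nzy.
- apply: le_trans (E_ge1 z (fun w => th ^+ (dist w y)) s Hge).
  rewrite -h exprS mulrA -hth; apply: ler_wpM2r; first exact: Hge.
  apply: ler_wpM2r; [exact: ltW| exact: hm].
- apply: le_trans (E_gem1 z (fun w => th ^+ (dist w y)) s Hge).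
  rewrite -h exprS mulrA -hth; apply: ler_wpM2r; first exact: Hge.
  apply: ler_wpM2r; [exact: ltW| exact: hm].
Qed.

Lemma V_exists (y : state) : exists V : state -> R,
  (forall w, 0 <= V w) /\ (forall z, z != y -> 1 + E z V <= V z).
Proof.
have [m [m0 hm]] := min_pi.
have hq := Hq; have hqp := Hqp; have hws := Hws.
pose th := m * (1 - p) / 2.
have th0 : 0 < th by rewrite /th; apply: divr_gt0 => //; apply: mulr_gt0.
have hth : m * (1 - p) = 2 * th by rewrite /th; field.
have th1 : th <= 1.
  have hm1 : m <= 1.
    apply: le_trans (hm (o0,o0)) _; rewrite -Hsum (bigD1 (o0,o0)) //= lerDl.
    by apply: sumr_ge0 => s _; exact: ltW.
  rewrite /th; have: m * (1 - p) <= 1 * 1 by apply: ler_pM => //; [exact: ltW|exact: ltW|lra].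
  lra.
set Sy := \sum_s `|(y s)%:~R : R|.
set c := 2 * (2 * p - 1) * m.
have c0 : 0 < c by rewrite /c; apply: mulr_gt0 => //; apply: mulr_gt0 => //; lra.
pose Y := 8 / (c * ws) + Sy.
pose N0 := (Num.Def.trunc Y).+1.
have HN0 : Y < N0%:R by exact: truncnS_gt.
pose B := 2 / th ^+ N0.
have thN0 : 0 < th ^+ N0 by apply: exprn_gt0.
have B0 : 0 <= B by apply: divr_ge0 => //; exact: ltW.
exists (fun w => Qf w + B * (1 - th ^+ (dist w y))).
split.
  move=> w; apply: addr_ge0; first exact: Q_ge0.
  by apply: mulr_ge0 => //; rewrite subr_ge0; apply: exprn_ile1 => //; exact: ltW.
move=> z nzy.
rewrite E_add E_scale E_sub E_const EQ.
have Hpsi := psi_drift m th y z m0 hm hth th0 nzy.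
set X := \sum_s `|Lf z s|.
have HX : c * X / 2 <= \sum_s pi s * ((2 * p - 1) * `|Lf z s|).
  rewrite /X /c mulr_sumr mulr_suml; apply: ler_sum => s _.
  have := hm s; have := normr_ge0 (Lf z s) => h1 h2.
  have h3 : 0 <= (2 * p - 1) by lra.
  have : m * ((2 * p - 1) * `|Lf z s|) <= pi s * ((2 * p - 1) * `|Lf z s|).
    apply: ler_wpM2r => //; exact: mulr_ge0.
  move=> h4; apply: le_trans h4; rewrite -mulrA mulrC -!mulrA; lra.
have Hsum2 : \sum_s pi s * (1 - 2 * (2 * p - 1) * `|Lf z s|) =
   1 - 2 * \sum_s pi s * ((2 * p - 1) * `|Lf z s|).
  rewrite mulr_sumr; transitivity (\sum_s pi s - \sum_s 2 * (pi s * ((2 * p - 1) * `|Lf z s|))); last by rewrite Hsum.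
  rewrite -sumrB; apply: eq_bigr => s _; ring.
rewrite Hsum2.
set P := \sum_s pi s * ((2 * p - 1) * `|Lf z s|) in HX *.
set tz := th ^+ dist z y in Hpsi *.
set Et := E z (fun w => th ^+ dist w y) in Hpsi *.
have hBE : B * (2 * tz) <= B * Et by apply: ler_wpM2l.
have tz0 : 0 <= tz by apply: exprn_ge0; exact: ltW.
have Btz0 : 0 <= B * tz by exact: mulr_ge0.
case: (lerP 2 (c * X)) => hcX.
  suff : 1 + (Qf z + (1 - 2 * P) + B * (1 - Et)) <= Qf z + B * (1 - tz) by [].
  have : B * (1 - Et) = B - B * Et by ring.
  have : B * (1 - tz) = B - B * tz by ring.
  lra.
have HS := S_bound z; rewrite -/X in HS.
have hd := dist_bound z y; rewrite -/Sy in hd.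
have hdist : (dist z y < N0)%N.
  rewrite -(ltr_nat R); apply: le_lt_trans hd _; apply: le_lt_trans HN0.
  rewrite /Y lerD2r.
  have hX8 : 4 * X <= 8 / c.
    rewrite ler_pdivlMr //; have := hcX; lra.
  rewrite ler_pdivlMr; last by apply: mulr_gt0.
  have : ws * \sum_s `|(z s)%:~R : R| <= 8 / c by exact: le_trans HS hX8.
  rewrite ler_pdivlMr // => h.
  lra.
have htz : th ^+ N0 <= tz.
  by apply: ler_wiXn2l => //; [exact: ltW| exact: ltnW].
have hBtz : 2 <= B * tz.
  rewrite /B mulrAC ler_pdivlMr //.
  by apply: ler_wpM2l.
suff : 1 + (Qf z + (1 - 2 * P) + B * (1 - Et)) <= Qf z + B * (1 - tz) by [].
have : B * (1 - Et) = B - B * Et by ring.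
have : B * (1 - tz) = B - B * tz by ring.
have : 0 <= P by apply: le_trans HX; apply: divr_ge0; [apply: mulr_ge0; [exact: ltW| apply: sumr_ge0 => s _; exact: normr_ge0]|].
lra.
Qed.

End Main.


Theorem theorem1 (R : realType) (wo wm1 wm2 ws p : R) (pi : stratum -> R) :
  0 <= wo -> 0 <= wm1 -> 0 <= wm2 -> 0 <= ws ->
  wo + wm1 + wm2 + ws = 1 ->
  (* 0 < q < p < 1 with q = 1 - p *)
  0 < 1 - p -> 1 - p < p -> p < 1 ->
  (* stratum probabilities of the i.i.d. multinomial covariate profiles *)
  (forall s, 0 < pi s) -> \sum_(s : stratum) pi s = 1 ->
  (* condition (A) *)
  0 < ws ->
  (* condition (B) *)
  (let u1 := wo + wm1 + wm2 + ws in
   let u2 := wo + wm1 in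
   let u3 := wo + wm2 in
   let u4 := wo in
   forall x1 x2 x3 : R,
     u1 * x1 + u2 * x2 + u3 * x3 = u4 ->
     u2 * x1 + u1 * x2 + u4 * x3 = u3 ->
     u3 * x1 + u4 * x2 + u1 * x3 = u2 ->
     `|x1| + `|x2| + `|x3| < 1) ->
  pos_rec_chain_period wo wm1 wm2 ws p pi 2.
Proof.
move=> Hwo Hwm1 Hwm2 Hws' HW Hq Hqp Hp1 Hpi Hsum Hws _.
split; first exact: (irred _ _ _ _ _ _ _ Hq Hqp Hpi).
split.
  move=> x.
  have [V [V0 Vd]] := V_exists _ _ _ _ _ _ _ Hq Hqp Hpi Hsum Hwo Hwm1 Hwm2 Hws HW x.
  exact: (posrec_y _ _ _ _ _ _ _ Hq Hqp Hpi Hsum _ _ V0 Vd).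
move=> x; exact: (period2 _ _ _ _ _ _ _ Hq Hqp Hpi).
Qed.
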